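(* Let $A_1, A_2, A_3, \dots$ be independent and identically distributed real random variables, each with Gaussian distribution $\mathcal{N}(\mu,\sigma^2)$, $\sigma>0$. For $k\ge 2$ let $\mathbf A^{(k)}=(A_1,\dots,A_k)\in\mathbb R^k$ and $$S_k=\operatorname{softmax}_k(\mathbf A^{(k)})_1=\frac{e^{A_1}}{\sum_{j=1}^k e^{A_j}}.$$ For a threshold $\tau\in\mathbb R$ consider the binarized variable $\hat B_k(\tau)=\operatorname{sign}(S_k-\tau)\in\{-1,1\}$, and let $\tau_k$ be the threshold that maximizes the Shannon entropy $\mathcal H(\hat B_k(\tau))$ over $\tau\in\mathbb R$ (equivalently, the value with $P(S_k\le \tau_k)=\tfrac12$). Then the entropy-maximizing threshold is negatively correlated with the number of elements $k$: $\tau_{k+1}<\tau_k$ for every $k\ge 2$.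
   Context: $\operatorname{sign}(x)=1$ if $x\ge 0$ and $-1$ otherwise. The Shannon entropy of a random variable $B$ taking values in $\{-1,1\}$ is $\mathcal H(B)=-\sum_{b\in\{-1,1\}}p(b)\log p(b)$. *)

(* Defs.v *)
From HB Require Import structures.
From mathcomp Require Import all_boot all_order all_algebra.
From mathcomp Require Import all_classical all_reals all_analysis.
Set Implicit Arguments. Unset Strict Implicit. Unset Printing Implicit Defensive.
Import Order.TTheory GRing.Theory Num.Theory.
Import numFieldNormedType.Exports.
Local Open Scope classical_set_scope.
Local Open Scope ring_scope.

Definition sgn {R : realType} (x : R) : R := if 0 <= x then 1 else -1.

Definition plogp {R : realType} (p : R) : R := if p == 0 then 0 else p * ln p.

Definition entropy_pm1 d (T : measurableType d) (R : realType)
  (P : probability T R) (B : T -> R) : R :=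
  - \sum_(b <- [:: -1; 1]) plogp (fine (P (B @^-1` [set b]))).

Definition mutually_independent d (T : measurableType d) (R : realType)
  (P : probability T R) (A : nat -> {RV P >-> R}) : Prop :=
  forall (s : seq nat) (B : nat -> set R), uniq s ->
    (forall i, i \in s -> measurable (B i)) ->
    P (\bigcap_(i in [set j | j \in s]) (A i @^-1` B i)) =
    (\prod_(i <- s) P (A i @^-1` B i))%E.

(* Indexing is 0-based: A 0, ..., A (k-1) stand for A_1, ..., A_k.
   S_k = softmax_k(A_1..A_k)_1 = e^{A_1} / sum_{j=1}^k e^{A_j}. *)
Definition softmax1 d (T : measurableType d) (R : realType)
  (P : probability T R) (A : nat -> {RV P >-> R}) (k : nat) (x : T) : R :=
  expR (A 0%N x) / \sum_(j < k) expR (A j x).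

Definition Bhat d (T : measurableType d) (R : realType)
  (P : probability T R) (A : nat -> {RV P >-> R}) (k : nat) (tau : R) : T -> R :=
  fun x => sgn (softmax1 A k x - tau).

Definition entropy_max_threshold d (T : measurableType d) (R : realType)
  (P : probability T R) (A : nat -> {RV P >-> R}) (k : nat) (tau : R) : Prop :=
  forall t : R, entropy_pm1 P (Bhat A k t) <= entropy_pm1 P (Bhat A k tau).

(* Main.v *)
Require Import Defs.
From HB Require Import structures.
From mathcomp Require Import all_boot all_order all_algebra.
From mathcomp Require Import all_classical all_reals all_analysis.
From mathcomp Require Import ring lra.
Set Implicit Arguments. Unset Strict Implicit. Unset Printing Implicit Defensive.
Import Order.TTheory GRing.Theory Num.Theory.
Import numFieldNormedType.Exports.
Local Open Scope classical_set_scope.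
Local Open Scope ring_scope.

Lemma absbound {R : realType} (m a b x : R) : a <= x -> x <= b -> `|x - m| <= `|a - m| + `|b - m|.
Proof.
move=> ax xb.
have h1 := ler_norm (b - m); have h2 := normr_ge0 (a - m).
have h3 : m - a <= `|a - m| by rewrite -normrN opprB ler_norm.
have h4 := normr_ge0 (b - m).
rewrite ler_norml; apply/andP; split; lra.
Qed.
Section gauss.
Local Open Scope ereal_scope.
Context {R : realType} (m s : R).
Hypothesis s0 : (0 < s)%R.

Lemma np_le (a b : R) : (a <= b)%R ->
  normal_prob m s `[a, b] <= (normal_peak s * (b - a))%:E.
Proof.
move=> ab; rewrite /normal_prob.
have sn0 : s != 0%R by rewrite gt_eqF.
apply: (@le_trans _ _ (\int[lebesgue_measure]_(x in `[a, b]) (normal_peak s)%:E)).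
  apply: ge0_le_integral => //=.
  - by move=> x _; rewrite lee_fin normal_pdf_ge0.
  - apply/measurable_realfun.measurable_EFinP; exact: (measurable_funTS (measurable_normal_pdf m s)).
  - by move=> x _; rewrite lee_fin normal_pdf_ub.
rewrite integral_cst //= lebesgue_measure_itv /= lte_fin.
have [ab'|ba] := ltrP a b; first by rewrite -EFinD -EFinM.
have -> : b = a by apply/eqP; rewrite eq_le ba ab.
by rewrite subrr mulr0 mule0.
Qed.

Lemma np_gt0 (a b : R) : (a < b)%R -> 0 < normal_prob m s `[a, b[.
Proof.
move=> ab; rewrite /normal_prob.
have sn0 : s != 0%R by rewrite gt_eqF.
pose K := ((`|a - m| + `|b - m|) ^+ 2)%R.
pose c := (normal_peak s * expR (- K / (s ^+ 2 *+ 2)))%R.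
have c0 : (0 < c)%R by rewrite mulr_gt0 ?normal_peak_gt0 ?expR_gt0.
apply: (@lt_le_trans _ _ (\int[lebesgue_measure]_(x in `[a, b[) c%:E)).
  rewrite integral_cst //= lebesgue_measure_itv /= lte_fin ab.
  by rewrite -EFinD -EFinM lte_fin mulr_gt0 // subr_gt0.
apply: ge0_le_integral => //=.
- by move=> x _; rewrite lee_fin ltW.
- apply/measurable_realfun.measurable_EFinP; exact: (measurable_funTS (measurable_normal_pdf m s)).
move=> x; rewrite in_itv /= => /andP[ax xb].
rewrite lee_fin normal_pdfE //= ler_wpM2l ?normal_peak_ge0 // /normal_fun ler_expR.
rewrite !mulNr lerN2 ler_pM2r ?invr_gt0 ?pmulrn_lgt0 ?exprn_gt0 // /K.
have h1 := absbound m ax (ltW xb).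
rewrite -real_normK ?num_real //.
have h2 := normr_ge0 (x - m)%R; nra.
Qed.
End gauss.
Section entropy.
Context {R : realType}.
Definition hb (q : R) := - (plogp q + plogp (1 - q)).

Lemma ln_lt_sub1 (y : R) : 0 < y -> y != 1 -> 1 + ln y < y.
Proof.
move=> y0 y1; have := @expR_gt1Dx R (ln y); rewrite lnK ?posrE //; apply.
apply: contra y1 => /eqP l0; by rewrite -(lnK (x:=y)) ?posrE // l0 expR0.
Qed.

Lemma hb_half : hb (1/2) = ln 2.
Proof.
rewrite /hb /plogp.
have -> : 1 - 1/2 = 1/2 :> R by field.
have h : (1/2 : R) != 0 by rewrite div1r invr_neq0 // pnatr_eq0.
rewrite (negbTE h) div1r lnV ?posrE //; field; by [].
Qed.

Lemma hb_lt (q : R) : 0 <= q -> q <= 1 -> q != 1/2 -> hb q < ln 2.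
Proof.
move=> q0 q1 qh.
have l2 : 0 < ln (2 : R) by rewrite ln_gt0 // ltr1n.
rewrite /hb /plogp.
have [->|qn0] := eqVneq q 0; first by rewrite subr0 oner_eq0 ln1 mulr0 add0r oppr0.
have [->|qn1] := eqVneq q 1; first by rewrite subrr eqxx ln1 mulr0 addr0 oppr0.
have qp : 0 < q by rewrite lt_neqAle eq_sym qn0.
have qp1 : 0 < 1 - q by rewrite subr_gt0 lt_neqAle qn1.
rewrite subr_eq0 eq_sym (negbTE qn1).
have G (r : R) : 0 < r -> r != 1/2 -> r * (1 - ln 2 - ln r) < 1/2.
  move=> r0 rh.
  have y0 : 0 < (2 * r)^-1 by rewrite invr_gt0 mulr_gt0.
  have y1 : (2 * r)^-1 != 1.
    apply: contra rh => /eqP e; apply/eqP.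
    have : 2 * r = 1 by rewrite -[2 * r]invrK e invr1.
    move=> e2; lra.
  have := ln_lt_sub1 y0 y1.
  rewrite lnV ?posrE ?mulr_gt0 // lnM ?posrE // => H.
  have := H; rewrite -(ltr_pM2l r0) => H2.
  have -> : 1/2 = r * (2 * r)^-1 by field; rewrite gt_eqF.
  have e : 1 - ln 2 - ln r = 1 + - (ln 2 + ln r) by ring.
  by rewrite e.
have G1 := G q qp qh.
have qh2 : 1 - q != 1/2.
  apply: contra qh => /eqP e; apply/eqP.
  have -> : q = 1 - (1 - q) by ring.
  by rewrite e; field.
have G2 := G (1 - q) qp1 qh2.
lra.
Qed.
End entropy.
Section main.
Context d (T : measurableType d) (R : realType) (P : probability T R)
  (A : nat -> {RV P >-> R}) (mu sigma : R).
Hypothesis s0 : 0 < sigma.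
Hypothesis indep : mutually_independent A.
Hypothesis hdist : forall (i : nat) (B : set R), measurable B ->
     distribution P (A i) B = normal_prob mu sigma B.

Definition Z n x := \sum_(j < n) expR (A j x).
Definition U n x := \sum_(j < n) expR (A j.+1 x).
Notation S := (softmax1 A).

Lemma mA i : measurable_fun setT (A i : T -> R).
Proof. exact: measurable_funPT. Qed.

Lemma PX i B : measurable B -> P (A i @^-1` B) = normal_prob mu sigma B.
Proof. by move=> mB; rewrite -(hdist i mB). Qed.

Lemma ZE n x : Z n.+1 x = expR (A 0 x) + U n x.
Proof. by rewrite /Z big_ord_recl. Qed.

Lemma ZSE n x : Z n.+1 x = Z n x + expR (A n x).
Proof. by rewrite /Z big_ord_recr. Qed.

Lemma U_ge0 n x : 0 <= U n x.
Proof. by rewrite /U sumr_ge0 // => i _; rewrite ltW ?expR_gt0. Qed.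

Lemma U_gt0 n x : 0 < U n.+1 x.
Proof. by rewrite /U big_ord_recl ltr_wpDr ?expR_gt0 // sumr_ge0 // => i _; rewrite ltW ?expR_gt0. Qed.

Lemma Z_gt0 n x : 0 < Z n.+1 x.
Proof. by rewrite ZE ltr_wpDr ?expR_gt0 ?U_ge0. Qed.

Lemma SE n x : S n.+1 x = expR (A 0 x) / (expR (A 0 x) + U n x).
Proof. by rewrite /softmax1 -/(Z _ _) ZE. Qed.

Lemma SE' n x : S n.+1 x = expR (A 0 x - ln (Z n.+1 x)).
Proof.
rewrite /softmax1 -/(Z _ _) expRD expRN lnK //; exact: Z_gt0.
Qed.

Lemma mZ n : measurable_fun setT (Z n).
Proof.
apply: measurable_sum => j; apply: measurableT_comp => //; exact: mA.
Qed.

Lemma mS n : measurable_fun setT (S n.+1).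
Proof.
have -> : S n.+1 = fun x => expR (A 0 x - ln (Z n.+1 x)) by apply: funext => x; rewrite SE'.
apply: measurableT_comp => //; apply: measurable_realfun.measurable_funB; first exact: mA.
apply: measurableT_comp => //; exact: mZ.
Qed.

Lemma S_gt0 n x : 0 < S n.+1 x.
Proof. by rewrite SE' expR_gt0. Qed.

Lemma S_lt1 n x : S n.+2 x < 1.
Proof.
rewrite SE ltr_pdivrMr ?ltr_wpDr ?expR_gt0 ?U_ge0 // mul1r ltrDl; exact: U_gt0.
Qed.

Lemma S_lt n x : S n.+2 x < S n.+1 x.
Proof.
rewrite /softmax1 -!/(Z _ _) ZSE ltr_pM2l ?expR_gt0 // ltf_pV2 ?posrE ?addr_gt0 ?Z_gt0 ?expR_gt0 //.
by rewrite ltrDl expR_gt0.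
Qed.

Definition pr (E : set T) : R := fine (P E).

Lemma prE E : measurable E -> P E = (pr E)%:E.
Proof.
move=> mE; rewrite /pr fineK // ge0_fin_numE ?measure_ge0 //.
by rewrite (le_lt_trans (probability_le1 P mE)) // ltry.
Qed.

Lemma pr_ge0 E : 0 <= pr E.
Proof. by rewrite /pr fine_ge0 ?measure_ge0. Qed.

Lemma pr_le1 E : measurable E -> pr E <= 1.
Proof. by move=> mE; have := probability_le1 P mE; rewrite prE // lee_fin. Qed.

Lemma prC E : measurable E -> pr (~` E) = 1 - pr E.
Proof.
move=> mE; have mC : measurable (~` E) by exact: measurableC.
have := probability_setC P mE; rewrite (prE mC) (prE mE) => h.
by apply: EFin_inj; rewrite h EFinB.
Qed.

Lemma mSpre n (Y : set R) : measurable Y -> measurable (S n.+1 @^-1` Y).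
Proof. by move=> mY; rewrite -[_ @^-1` _]setTI; exact: mS. Qed.

Definition Lt n t := S n.+1 @^-1` `]-oo, t[.

Lemma mLt n t : measurable (Lt n t).
Proof. exact: mSpre. Qed.

Lemma LtE n t x : Lt n t x <-> S n.+1 x < t.
Proof. by rewrite /Lt /= in_itv. Qed.

Lemma sgnN1 (y : R) : sgn y = -1 <-> y < 0.
Proof. rewrite /sgn; case: leP => h; split => // e; lra. Qed.

Lemma sgn1 (y : R) : sgn y = 1 <-> 0 <= y.
Proof. rewrite /sgn; case: leP => h; split => // e; lra. Qed.

Lemma entropyE n t : entropy_pm1 P (Bhat A n.+1 t) = hb (pr (Lt n t)).
Proof.
rewrite /entropy_pm1 big_cons big_cons big_nil addr0 /hb.
have e1 : Bhat A n.+1 t @^-1` [set -1] = Lt n t.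
  apply/seteqP; split => x; rewrite /Bhat /Lt /= in_itv /= sgnN1 subr_lt0 //.
have e2 : Bhat A n.+1 t @^-1` [set 1] = ~` Lt n t.
  apply/seteqP; split => x; rewrite /Bhat /Lt /= in_itv /= sgn1 subr_ge0 leNgt.
    by move=> /negP.
  by move=> /negP.
by rewrite e1 e2 -(prC (mLt n t)).
Qed.
Definition Pi n : set (set T) := [set E | exists B : nat -> set R,
  (forall i, measurable (B i)) /\
  E = \bigcap_(i in [set j | j \in iota 1 n]) (A i @^-1` B i)].

Lemma Pi_meas n : Pi n.+1 `<=` measurable.
Proof.
move=> E [B [mB ->]]; apply: bigcap_measurable.
  by exists 1%N; rewrite /= inE.
move=> k _; rewrite -[_ @^-1` _]setTI; exact: mA.
Qed.

Lemma PiT n : Pi n setT.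
Proof.
exists (fun=> setT); split => // ; apply/seteqP; split => x //= _ i _; done.
Qed.

Lemma PiI n : setI_closed (Pi n).
Proof.
move=> E F [B [mB ->]] [C [mC ->]].
exists (fun i => B i `&` C i); split; first by move=> i; exact: measurableI.
apply/seteqP; split => x /=.
  by move=> [h1 h2] i hi; split; [exact: h1|exact: h2].
by move=> h; split => i hi; have [] := h i hi.
Qed.

Lemma Pi_prod n (B : nat -> set R) : (forall i, measurable (B i)) ->
  P (\bigcap_(i in [set j | j \in iota 1 n]) (A i @^-1` B i)) =
  (\prod_(i <- iota 1 n) P (A i @^-1` B i))%E.
Proof. by move=> mB; apply: indep => //; exact: iota_uniq. Qed.

Lemma Pi_indep n (B0 : set R) E : measurable B0 -> Pi n E ->
  P (A 0 @^-1` B0 `&` E) = (P (A 0 @^-1` B0) * P E)%E.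
Proof.
move=> mB0 [B [mB ->]].
pose B' i := if i == 0%N then B0 else B i.
have mB' : forall i, measurable (B' i) by move=> i; rewrite /B'; case: ifP.
have := @indep (0%N :: iota 1 n) B'.
rewrite /= mem_iota ltnn /= iota_uniq big_cons => /(_ isT (fun i _ => mB' i)) H.
rewrite Pi_prod //.
have -> : (\prod_(i <- iota 1 n) P (A i @^-1` B i) = \prod_(i <- iota 1 n) P (A i @^-1` B' i))%E.
  by apply: eq_big_seq => i; rewrite mem_iota /B'; case: i.
rewrite -H; congr (P _).
apply/seteqP; split => x /=.
  move=> [h0 h] i /= hi; rewrite in_cons in hi.
  case/orP: hi => [/eqP ->|hi]; first by rewrite /B' eqxx.
  have := h i hi; rewrite /B'; case: eqP hi => [->|//].
  by rewrite mem_iota.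
move=> h; split; first by have := h 0%N; rewrite /= in_cons eqxx /B' => /(_ isT).
move=> i /= hi; have := h i; rewrite /= in_cons hi orbT /B' => /(_ isT).
by case: eqP hi => // ->; rewrite mem_iota.
Qed.
Lemma indep_sigma n B0 E : measurable B0 -> <<s Pi n.+1 >> E ->
  P (A 0 @^-1` B0 `&` E) = (P (A 0 @^-1` B0) * P E)%E.
Proof.
move=> mB0 hE.
have mD : measurable (A 0 @^-1` B0) by rewrite -[_ @^-1` _]setTI; exact: mA.
pose r : {nonneg R} := NngNum (pr_ge0 (A 0 @^-1` B0)).
have cover : \bigcup_(k : nat) (fun=> @setT T) k = setT.
  by apply/seteqP; split => // x _; exists 0%N.
have H1 : forall F, Pi n.+1 F -> mrestr P mD F = mscale r P F.
  move=> F hF; rewrite /mrestr /mscale /= setIC (Pi_indep mB0 hF) prE //.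
have H2 : forall k : nat, (mrestr P mD ((fun=> setT) k) < +oo)%E.
  by move=> k; rewrite /mrestr setTI (le_lt_trans (probability_le1 P mD)) // ltry.
have := @g_sigma_algebra_measure_unique _ _ _ (Pi n.+1) (@Pi_meas n) (fun=> setT)
  (fun _ => PiT _) cover (mrestr P mD) (mscale r P) (@PiI _) H1 H2 E hE.
move=> h; rewrite setIC; transitivity (mrestr P mD E) => //; rewrite h.
by rewrite [in RHS](prE mD).
Qed.

Lemma mA' n j : (0 < j <= n)%N ->
  measurable_fun (setT : set (g_sigma_algebraType (Pi n))) (A j : T -> R).
Proof.
move=> hj _ Y mY; apply: sub_sigma_algebra.
exists (fun i => if i == j then Y else setT); split; first by move=> i; case: ifP.
apply/seteqP; split => x /=.
  move=> [_ h] i _; by case: ifP => // /eqP ->.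
move=> h; split => //; have := h j; rewrite /= mem_iota eqxx.
by case/andP: hj => h1 h2; rewrite h1 /= add1n ltnS h2 => /(_ isT).
Qed.

Lemma mU' n : measurable_fun (setT : set (g_sigma_algebraType (Pi n))) (U n).
Proof.
apply: measurable_sum => j; apply: measurableT_comp => //.
by apply: mA'; rewrite ltn_ord.
Qed.

Lemma U_sigma n (f : R -> R) (Y : set R) : measurable_fun setT f -> measurable Y ->
  <<s Pi n >> ((fun x => f (U n x)) @^-1` Y).
Proof.
move=> mf mY.
have : measurable_fun (setT : set (g_sigma_algebraType (Pi n))) (fun x => f (U n x)).
  by apply: measurableT_comp => //; exact: mU'.
by move=> /(_ measurableT Y mY); rewrite setTI.
Qed.
Definition peak := normal_peak sigma.

Lemma mU n : measurable_fun setT (U n).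
Proof. by apply: measurable_sum => j; apply: measurableT_comp => //; exact: mA. Qed.

Lemma mV n (r : R) : measurable_fun setT (fun x => ln (r * U n x)).
Proof.
apply: measurableT_comp => //; apply: measurable_realfun.measurable_funM => //.
exact: mU.
Qed.

Lemma prA0_le (Y : set R) a dl : measurable Y -> 0 <= dl -> Y `<=` `[a, a + dl] ->
  (P (A 0 @^-1` Y) <= (peak * dl)%:E)%E.
Proof.
move=> mY dl0 sY; rewrite PX //.
apply: (@le_trans _ _ (normal_prob mu sigma `[a, a + dl])).
  by apply: le_measure => //; rewrite inE.
have h : a <= a + dl by rewrite lerDl.
by have := np_le mu s0 h; rewrite addrAC subrr add0r.
Qed.

Lemma grid n (r : R) (I : nat -> set R) (a : nat -> R) dl : 0 <= dl ->
  (forall m, measurable (I m)) -> trivIset setT I ->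
  (forall m, I m `<=` `[a m, a m + dl]) ->
  (P ([set x | A 0 x = ln (r * U n.+1 x)] `&` A 0 @^-1` (\bigcup_m I m))
    <= (peak * dl)%:E)%E.
Proof.
move=> dl0 mI tI sI.
pose V x := ln (r * U n.+1 x).
have mVp Y : measurable Y -> measurable (V @^-1` Y).
  by move=> mY; rewrite -[_ @^-1` _]setTI; exact: mV.
have mA0 Y : measurable Y -> measurable (A 0 @^-1` Y).
  by move=> mY; rewrite -[_ @^-1` _]setTI; exact: mA.
pose F m := A 0 @^-1` I m `&` V @^-1` I m.
have mF m : measurable (F m) by apply: measurableI; [exact: mA0|exact: mVp].
have mE : measurable ([set x | A 0 x = V x] `&` A 0 @^-1` (\bigcup_m I m)).
  apply: measurableI; last by apply: mA0; exact: bigcupT_measurable.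
  rewrite (_ : [set x | _] = (fun x => A 0 x - V x) @^-1` [set 0]).
    rewrite -[_ @^-1` _]setTI.
    by apply: (measurable_realfun.measurable_funB (mA 0) (mV n.+1 r)).
  apply/seteqP; split => x /=.
    by move=> ->; rewrite subrr.
  by move=> /eqP; rewrite subr_eq0 => /eqP.
apply: (le_trans (measure_sigma_subadditive P mF mE _)).
  by move=> x [/= e [m _ hm]]; exists m => //; split; [exact: hm|move: hm; rewrite /= e].
apply: (le_trans (lee_nneseries (v := fun m => ((peak * dl)%:E * P (V @^-1` I m))%E) _ _)).
- by move=> i _ _; exact: measure_ge0.
- move=> m _; rewrite /F.
  change (P (A 0 @^-1` I m `&` V @^-1` I m) <= (peak * dl)%:E * P (V @^-1` I m))%E.
  rewrite (@indep_sigma n (I m) (V @^-1` I m)) //; last first.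
    apply: (@U_sigma n.+1 (fun u => ln (r * u)) (I m)) => //.
    apply: measurableT_comp => //; exact: measurable_realfun.measurable_funM.
  apply: lee_wpmul2r; first exact: measure_ge0.
  exact: prA0_le.
rewrite nneseriesZl; last by move=> i _; exact: measure_ge0.
have e : (\big[+%E/0%R]_(0 <= i <oo) P (V @^-1` I i) = P (\bigcup_(i in setT) V @^-1` I i))%E.
  have h1 : forall i, setT i -> measurable (V @^-1` I i) by move=> i _; exact: mVp.
  have h2 : trivIset setT (fun i => V @^-1` I i).
    move=> i j _ _ [x [h1' h2']]; apply: tI => //; by exists (V x).
  rewrite (measure_bigcup P setT (fun i => V @^-1` I i) h1 h2).
  by congr (limn _); apply: funext => m; apply: eq_bigl => i; rewrite in_setT.
rewrite e -[X in (_ <= X)%E]mule1; apply: lee_wpmul2l.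
  by rewrite lee_fin mulr_ge0 // normal_peak_ge0.
apply: probability_le1; apply: bigcup_measurable => i _; exact: mVp.
Qed.
Lemma mEq n r : measurable [set x | A 0 x = ln (r * U n x)].
Proof.
rewrite (_ : [set x | _] = (fun x => A 0 x - ln (r * U n x)) @^-1` [set 0]).
  rewrite -[_ @^-1` _]setTI.
  by apply: (measurable_realfun.measurable_funB (mA 0) (mV n r)).
apply/seteqP; split => x /=.
  by move=> ->; rewrite subrr.
by move=> /eqP; rewrite subr_eq0 => /eqP.
Qed.

Lemma mA0pre Y : measurable Y -> measurable (A 0 @^-1` Y).
Proof. by move=> mY; rewrite -[_ @^-1` _]setTI; exact: mA. Qed.

Lemma peak_gt0 : 0 < peak.
Proof. by rewrite normal_peak_gt0 // gt_eqF. Qed.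

Lemma atom n t : P (S n.+2 @^-1` [set t]) = 0%E.
Proof.
have mE : measurable (S n.+2 @^-1` [set t]) by apply: mSpre.
have [t0|t0] := lerP t 0.
  rewrite (_ : _ @^-1` _ = set0) ?measure0 //; apply/seteqP; split => x //= e.
  by have := S_gt0 n.+1 x; rewrite e ltNge t0.
have [t1|t1] := lerP 1 t.
  rewrite (_ : _ @^-1` _ = set0) ?measure0 //; apply/seteqP; split => x //= e.
  by have := S_lt1 n x; rewrite e ltNge t1.
pose r := t / (1 - t).
pose E' := [set x | A 0 x = ln (r * U n.+1 x)].
have sub : S n.+2 @^-1` [set t] `<=` E'.
  move=> x /=; rewrite SE => e; rewrite /E'.
  have p : 0 < expR (A 0 x) + U n.+1 x by rewrite ltr_wpDr ?U_ge0 ?expR_gt0.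
  have e2 : expR (A 0 x) = r * U n.+1 x.
    have : expR (A 0 x) = t * (expR (A 0 x) + U n.+1 x).
      by rewrite -e divfK // gt_eqF.
    rewrite /r => h; apply: (mulfI (x := 1 - t)); first by rewrite subr_eq0 gt_eqF.
    have n1 : 1 - t != 0 by rewrite subr_eq0 gt_eqF.
    have -> : (1 - t) * (t / (1 - t) * U n.+1 x) = t * U n.+1 x by field.
    lra.
  by rewrite /= -e2 expRK.
have key : forall dl, 0 < dl -> (P (S n.+2 @^-1` [set t]) <= ((peak * dl) + (peak * dl))%:E)%E.
  move=> dl dl0.
  pose I1 m : set R := [set` `[m%:R * dl, m.+1%:R * dl[].
  pose I2 m : set R := [set` `](- (m.+1%:R * dl)), - (m%:R * dl)]].
  have mI1 m : measurable (I1 m) by exact: measurable_itv.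
  have mI2 m : measurable (I2 m) by exact: measurable_itv.
  have G1 := @grid n r I1 (fun m => m%:R * dl) dl (ltW dl0) mI1.
  have G2 := @grid n r I2 (fun m => - (m.+1%:R * dl)) dl (ltW dl0) mI2.
  have t1' : trivIset setT I1.
    move=> i j _ _ [x []]; rewrite /I1 /= !in_itv /= => /andP[a1 b1] /andP[a2 b2].
    have h1 : i%:R * dl < j.+1%:R * dl by apply: le_lt_trans b2.
    have h2 : j%:R * dl < i.+1%:R * dl by apply: le_lt_trans b1.
    rewrite ltr_pM2r // ltr_nat ltnS in h1; rewrite ltr_pM2r // ltr_nat ltnS in h2.
    by apply/eqP; rewrite eqn_leq h1 h2.
  have t2' : trivIset setT I2.
    move=> i j _ _ [x []]; rewrite /I2 /= !in_itv /= => /andP[a1 b1] /andP[a2 b2].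
    have h1 : - (i.+1%:R * dl) < - (j%:R * dl) by apply: lt_le_trans b2.
    have h2 : - (j.+1%:R * dl) < - (i%:R * dl) by apply: lt_le_trans b1.
    rewrite ltrN2 ltr_pM2r // ltr_nat ltnS in h1; rewrite ltrN2 ltr_pM2r // ltr_nat ltnS in h2.
    by apply/eqP; rewrite eqn_leq h1 h2.
  have s1 : forall m, I1 m `<=` `[m%:R * dl, m%:R * dl + dl].
    move=> m x; rewrite /I1 /= !in_itv /= => /andP[a b].
    rewrite -natr1 mulrDl mul1r in b; apply/andP; split; lra.
  have s2 : forall m, I2 m `<=` `[- (m.+1%:R * dl), - (m.+1%:R * dl) + dl].
    move=> m x; rewrite /I2 /= !in_itv /= => /andP[a b].
    rewrite -natr1 mulrDl mul1r in a *; apply/andP; split; lra.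
  pose U1 := E' `&` A 0 @^-1` (\bigcup_m I1 m).
  pose U2 := E' `&` A 0 @^-1` (\bigcup_m I2 m).
  have mU1 : measurable U1.
    by apply: measurableI; [exact: mEq|apply: mA0pre; exact: bigcupT_measurable].
  have mU2 : measurable U2.
    by apply: measurableI; [exact: mEq|apply: mA0pre; exact: bigcupT_measurable].
  have cov : S n.+2 @^-1` [set t] `<=` U1 `|` U2.
    move=> x hx; have hE := sub x hx.
    have [y0|y0] := lerP 0 (A 0 x).
      left; split => //; exists (Num.trunc (A 0 x / dl)) => //.
      have := truncn_itv (divr_ge0 y0 (ltW dl0)) => /andP[a b].
      rewrite /I1 /= in_itv /=.
      by rewrite -ler_pdivlMr // a -ltr_pdivrMr // b.
    right; split => //; exists (Num.trunc (- A 0 x / dl)) => //.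
    have y0' : 0 <= - A 0 x by rewrite oppr_ge0 ltW.
    have := truncn_itv (divr_ge0 y0' (ltW dl0)) => /andP[a b].
    rewrite /I2 /= in_itv /=.
    rewrite ler_pdivlMr // in a; rewrite ltr_pdivrMr // in b.
    apply/andP; split; lra.
  apply: (@le_trans _ _ (P (U1 `|` U2))).
    by apply: le_measure => //; rewrite inE //; exact: measurableU.
  apply: (le_trans (measureU2 P mU1 mU2)); rewrite EFinD.
  by apply: leeD; [exact: G1|exact: G2].
suff : pr (S n.+2 @^-1` [set t]) = 0 by move=> h; rewrite prE // h.
have [p0|p0] := eqVneq (pr (S n.+2 @^-1` [set t])) 0; first by [].
have pp : 0 < pr (S n.+2 @^-1` [set t]) by rewrite lt_neqAle eq_sym p0 pr_ge0.
have := key (pr (S n.+2 @^-1` [set t]) / (4 * peak)).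
rewrite divr_gt0 ?mulr_gt0 ?peak_gt0 // prE // lee_fin => /(_ isT).
have pk := peak_gt0.
have -> : peak * (pr (S n.+2 @^-1` [set t]) / (4 * peak)) = pr (S n.+2 @^-1` [set t]) / 4.
  by field; rewrite gt_eqF.
lra.
Qed.
Lemma pr_le E F : measurable E -> measurable F -> E `<=` F -> pr E <= pr F.
Proof.
move=> mE mF EF; rewrite -lee_fin -!prE //.
by apply: le_measure => //; rewrite inE.
Qed.

Lemma lim_ub (F : nat -> set T) (c : R) : (forall m, measurable (F m)) ->
  {homo F : i j / (i <= j)%N >-> (i <= j)%O} ->
  (forall m, pr (F m) <= c) -> pr (\bigcup_m F m) <= c.
Proof.
move=> mF nd hc.
have mU : measurable (\bigcup_m F m) by exact: bigcupT_measurable.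
have h := @nondecreasing_cvg_mu _ _ _ P F mF mU nd.
rewrite -lee_fin -prE // -(cvg_lim _ h) //.
apply: lime_le; first by apply/cvg_ex; eexists; exact: h.
by apply: nearW => m /=; rewrite prE // lee_fin.
Qed.

Lemma lim_lb (F : nat -> set T) (c : R) : (forall m, measurable (F m)) ->
  {homo F : i j / (i <= j)%N >-> (j <= i)%O} ->
  (forall m, c <= pr (F m)) -> c <= pr (\bigcap_m F m).
Proof.
move=> mF nd hc.
have mU : measurable (\bigcap_m F m) by exact: bigcapT_measurable.
have fin : (P (F 0%N) < +oo)%E by rewrite prE // ltry.
have h := @nonincreasing_cvg_mu _ _ _ P F fin mF mU nd.
rewrite -lee_fin -prE // -(cvg_lim _ h) //.
apply: lime_ge; first by apply/cvg_ex; eexists; exact: h.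
by apply: nearW => m /=; rewrite prE // lee_fin.
Qed.
Lemma inv_lt (y M : R) : 0 < y -> y^-1 < M -> M^-1 < y.
Proof.
move=> y0 h; have yi : 0 < y^-1 by rewrite invr_gt0.
have M0 : 0 < M := lt_trans yi h.
by rewrite -(invrK y) ltf_pV2 ?posrE ?invr_gt0.
Qed.

Lemma median n : exists t0, pr (Lt n.+1 t0) = 1/2.
Proof.
pose Q := [set t | pr (Lt n.+1 t) <= 1/2].
have Lt0 : pr (Lt n.+1 0) = 0.
  rewrite (_ : Lt n.+1 0 = set0) ?/pr ?measure0 //.
  apply/seteqP; split => x //; rewrite LtE => h.
  by have := S_gt0 n.+1 x; rewrite ltNge ltW.
have Lt1 t : 1 < t -> pr (Lt n.+1 t) = 1.
  move=> t1; rewrite (_ : Lt n.+1 t = setT) ?/pr ?probability_setT //.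
  apply/seteqP; split => x // _; rewrite LtE.
  exact: lt_trans (S_lt1 n x) t1.
have hs : has_sup Q.
  split; first by exists 0; rewrite /Q /= Lt0.
  exists 1 => t Qt; rewrite leNgt; apply/negP => h.
  by move: Qt; rewrite /Q /= Lt1 //; lra.
pose t0 := sup Q.
have a : pr (Lt n.+1 t0) <= 1/2.
  have e : Lt n.+1 t0 = \bigcup_m Lt n.+1 (t0 - (m.+1%:R)^-1).
    apply/seteqP; split => x.
      rewrite LtE => h; exists (Num.trunc ((t0 - S n.+2 x)^-1)) => //.
      rewrite LtE.
      have p : 0 < t0 - S n.+2 x by rewrite subr_gt0.
      have := inv_lt p (truncnS_gt ((t0 - S n.+2 x)^-1)).
      by rewrite !ltrBrDl addrC.
    move=> [m _]; rewrite !LtE => h; apply: (lt_le_trans h).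
    by rewrite lerBlDr lerDl invr_ge0.
  rewrite e; apply: lim_ub.
  - by move=> m; exact: mLt.
  - move=> i j ij; apply/subsetPset => x; rewrite !LtE => h; apply: (lt_le_trans h).
    by rewrite lerB // lef_pV2 ?posrE ?ltr0n // ler_nat.
  - move=> m; have ep : 0 < (m.+1%:R : R)^-1 by rewrite invr_gt0 ltr0n.
    have [q Qq lq] := sup_adherent ep hs.
    apply: le_trans Qq; apply: pr_le; [exact: mLt|exact: mLt|].
    by move=> x; rewrite !LtE => h; apply: lt_trans lq.
have b : 1/2 <= pr (S n.+2 @^-1` `]-oo, t0]).
  have e : S n.+2 @^-1` `]-oo, t0] = \bigcap_m Lt n.+1 (t0 + (m.+1%:R)^-1).
    apply/seteqP; split => x /=.
      rewrite in_itv /= => h m _; rewrite LtE; apply: (le_lt_trans h).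
      by rewrite ltrDl invr_gt0 ltr0n.
    move=> h; rewrite in_itv /=; rewrite leNgt; apply/negP => h2.
    have p : 0 < S n.+2 x - t0 by rewrite subr_gt0.
    have := h (Num.trunc ((S n.+2 x - t0)^-1)) I; rewrite LtE.
    have := inv_lt p (truncnS_gt ((S n.+2 x - t0)^-1)).
    move=> h3 h4; rewrite ltrBrDl in h3.
    by have := lt_trans h4 h3; rewrite ltxx.
  rewrite e; apply: lim_lb.
  - by move=> m; exact: mLt.
  - move=> i j ij; apply/subsetPset => x; rewrite !LtE => h; apply: (lt_le_trans h).
    by rewrite lerD2l lef_pV2 ?posrE ?ltr0n // ler_nat.
  - move=> m; rewrite leNgt; apply/negP => h.
    have : Q (t0 + (m.+1%:R)^-1) by rewrite /Q /= ltW.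
    move=> /(sup_upper_bound hs); rewrite -/t0 gerDl leNgt invr_gt0 ltr0n.
    by [].
have c : pr (S n.+2 @^-1` `]-oo, t0]) = pr (Lt n.+1 t0).
  have e : S n.+2 @^-1` `]-oo, t0] = Lt n.+1 t0 `|` S n.+2 @^-1` [set t0].
    apply/seteqP; split => x /=; rewrite /Lt /= !in_itv /=.
      by rewrite le_eqVlt => /orP[/eqP ->|->]; [right|left].
    by move=> [/ltW|->].
  have mAt : measurable (S n.+2 @^-1` [set t0]) by exact: mSpre.
  have mL := mLt n.+1 t0.
  have mLe : measurable (S n.+2 @^-1` `]-oo, t0]) by apply: mSpre.
  have dis : Lt n.+1 t0 `&` S n.+2 @^-1` [set t0] = set0.
    by apply/seteqP; split => x //= [h1 h2]; move: h1; rewrite LtE h2 ltxx.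
  have h : P (Lt n.+1 t0 `|` S n.+2 @^-1` [set t0]) =
    (P (Lt n.+1 t0) + P (S n.+2 @^-1` [set t0]))%E := measureU P mL mAt dis.
  rewrite -e atom adde0 in h.
  by apply: EFin_inj; rewrite -(prE mLe) -(prE mL).
exists t0; lra.
Qed.
Lemma mApre i Y : measurable Y -> measurable (A i @^-1` Y).
Proof. by move=> mY; rewrite -[_ @^-1` _]setTI; exact: mA. Qed.

Lemma pos_D n tau : 0 < tau -> tau < 1 ->
  0 < pr (~` Lt n.+1 tau `&` Lt n.+2 tau).
Proof.
move=> t0 t1.
pose M := ln ((n.+1%:R * tau) / (1 - tau)).
pose L := 2 - ln tau.
pose B i : set R := if i == 0%N then [set` `[0, 1[] else
  if i == n.+2 then [set` `[L, L + 1[] else [set` `[- M - 1, - M[].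
have mB i : measurable (B i).
  by rewrite /B; case: ifP => _; [|case: ifP => _]; exact: measurable_itv.
pose Rc := \bigcap_(i in [set j | j \in iota 0 n.+3]) (A i @^-1` B i).
have mRc : measurable Rc.
  apply: bigcap_measurable; first by exists 0%N.
  move=> k _; exact: mApre.
have mD : measurable (~` Lt n.+1 tau `&` Lt n.+2 tau).
  by apply: measurableI; [apply: measurableC|]; exact: mLt.
have pRc : 0 < pr Rc.
  rewrite -lte_fin -prE // /Rc (@indep (iota 0 n.+3) B) ?iota_uniq //.
  rewrite (eq_bigr (fun i => (pr (A i @^-1` B i))%:E)); last first.
    by move=> i _; rewrite prE //; exact: mApre.
  rewrite prodEFin lte_fin; apply: prodr_gt0 => i _.
  rewrite -lte_fin -prE; last exact: mApre.
  have := PX i (mB i); move=> ->.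
  rewrite /B; case: ifP => _; first exact: np_gt0.
  case: ifP => _; apply: np_gt0 => //; lra.
apply: (lt_le_trans pRc); apply: pr_le => //.
move=> x hx.
have hB i : (i <= n.+2)%N -> B i (A i x).
  move=> hi; apply: hx; change (i \in iota 0 n.+3); by rewrite mem_iota add0n ltnS hi.
have [a0 a1] : 0 <= A 0 x /\ A 0 x < 1.
  by have := hB 0%N isT; rewrite /B eqxx /= in_itv /= => /andP[].
have hL : L <= A n.+2 x.
  by have := hB n.+2 (leqnn _); rewrite /B /= eqxx /= in_itv /= => /andP[].
have hM : forall j, (j < n.+1)%N -> A j.+1 x < - M.
  move=> j hj; have := hB j.+1 (leq_trans hj (leqnSn _)).
  rewrite /B /= eqSS (ltn_eqF hj) /= in_itv /= => /andP[].
  by [].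
have eM : expR (- M) = (1 - tau) / (n.+1%:R * tau).
  rewrite /M expRN lnK ?posrE; last by rewrite divr_gt0 ?mulr_gt0 ?subr_gt0.
  by rewrite invf_div.
have hU : U n.+1 x <= n.+1%:R * expR (- M).
  have : \sum_(j < n.+1) expR (A j.+1 x) <= \sum_(j < n.+1) expR (- M).
    by apply: ler_sum => j _; rewrite ler_expR ltW // hM.
  by rewrite sumr_const card_ord mulr_natl.
have he : 1 <= expR (A 0 x) by rewrite -expR0 ler_expR.
have he1 : expR (A 0 x) < expR 1 by rewrite ltr_expR.
have np : 0 < n.+1%:R :> R by rewrite ltr0n.
split.
- suff h : tau <= S n.+2 x by move=> /LtE; rewrite ltNge h.
  rewrite SE.
  have up : 0 < expR (A 0 x) + U n.+1 x by rewrite ltr_wpDr ?U_ge0 ?expR_gt0.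
  rewrite ler_pdivlMr //.
  have hU' : tau * U n.+1 x <= 1 - tau.
    have -> : 1 - tau = tau * (n.+1%:R * expR (- M)).
      by rewrite eM; field; rewrite (gt_eqF t0) nat1r pnatr_eq0.
    by rewrite ler_pM2l.
  nra.
- apply/LtE.
  rewrite /softmax1 -/(Z _ _) ZSE.
  have zp : 0 < Z n.+2 x by exact: Z_gt0.
  rewrite ltr_pdivrMr; last by rewrite addr_gt0 ?expR_gt0.
  have eL : tau * expR L = expR 2.
    by rewrite /L expRD expRN lnK ?posrE //; field; rewrite gt_eqF.
  have h2 : expR L <= expR (A n.+2 x) by rewrite ler_expR.
  have h3 : expR 1 < expR 2 :> R by rewrite ltr_expR ltr1n.
  have h4 : tau * expR L <= tau * expR (A n.+2 x) by rewrite ler_pM2l.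
  nra.
Qed.
Lemma half_of_max m tau : entropy_max_threshold A m.+2 tau -> pr (Lt m.+1 tau) = 1/2.
Proof.
move=> H; have [t0 h0] := median m.
have := H t0; rewrite !entropyE h0 hb_half => hle.
apply/eqP; apply: contraTT hle => hne; rewrite -ltNge.
by apply: hb_lt => //; [exact: pr_ge0|apply: pr_le1; exact: mLt].
Qed.

Lemma tau_range m tau : pr (Lt m.+1 tau) = 1/2 -> 0 < tau /\ tau < 1.
Proof.
move=> h; split.
  rewrite ltNge; apply/negP => t0; move: h.
  rewrite (_ : Lt m.+1 tau = set0) ?/pr ?measure0 /=; first by move=> /eqP; rewrite eq_sym mulf_eq0 oner_eq0 invr_eq0 pnatr_eq0.
  apply/seteqP; split => x //; rewrite LtE => hx.
  by have := S_gt0 m.+1 x; rewrite ltNge (le_trans (ltW hx) t0).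
rewrite ltNge; apply/negP => t1; move: h.
rewrite (_ : Lt m.+1 tau = setT) ?/pr ?probability_setT /=.
  by move=> e; have : (1 : R) = 1/2 := e; lra.
apply/seteqP; split => x // _; rewrite LtE.
exact: lt_le_trans (S_lt1 m x) t1.
Qed.

Lemma final_in n tauk tauk1 : entropy_max_threshold A n.+2 tauk ->
  entropy_max_threshold A n.+3 tauk1 -> tauk1 < tauk.
Proof.
move=> H1 H2.
have hk := half_of_max H1; have hk1 := half_of_max H2.
have [t0 t1] := tau_range hk.
rewrite ltNge; apply/negP => le.
pose C := ~` Lt n.+2 tauk1.
pose D := ~` Lt n.+1 tauk `&` Lt n.+2 tauk.
have mC : measurable C by apply: measurableC; exact: mLt.
have mD : measurable D by apply: measurableI; [apply: measurableC|]; exact: mLt.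
have mK : measurable (~` Lt n.+1 tauk) by apply: measurableC; exact: mLt.
have pD := pos_D n t0 t1.
have pC : pr C = 1/2 by rewrite /C prC ?hk1; [lra|exact: mLt].
have pK : pr (~` Lt n.+1 tauk) = 1/2 by rewrite prC ?hk; [lra|exact: mLt].
have dis : C `&` D = set0.
  apply/seteqP; split => x //= [hc [_ hd]]; apply: hc; apply/LtE.
  move/LtE: hd => hd; exact: (lt_le_trans hd le).
have sub : C `|` D `<=` ~` Lt n.+1 tauk.
  move=> x [hc|[hd _] //]; move=> /LtE h; apply: hc; apply/LtE.
  have := S_lt n.+1 x; lra.
have hU : P (C `|` D) = (P C + P D)%E := measureU P mC mD dis.
have mCD : measurable (C `|` D) by exact: measurableU.
have := pr_le mCD mK sub.
have -> : pr (C `|` D) = pr C + pr D.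
  by apply: EFin_inj; rewrite EFinD -(prE mC) -(prE mD) -(prE mCD).
lra.
Qed.
End main.

Theorem theorem1 (d : measure_display) (T : measurableType d) (R : realType)
  (P : probability T R) (A : nat -> {RV P >-> R}) (mu sigma : R) :
  0 < sigma ->
  mutually_independent A ->
  (forall (i : nat) (B : set R), measurable B ->
     distribution P (A i) B = normal_prob mu sigma B) ->
  forall (k : nat), (2 <= k)%N ->
  forall tauk tauk1 : R,
    entropy_max_threshold A k tauk ->
    entropy_max_threshold A k.+1 tauk1 ->
    tauk1 < tauk.
Proof.
move=> s0 indep hdist k hk tauk tauk1 H1 H2.
case: k hk H1 H2 => [|[|n]] // _ H1 H2.
exact: (final_in s0 indep hdist H1 H2).
Qed.
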